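(* Let $\nu,a,b\in\mathbb{R}$ with $0<b+\nu<(a+\nu)/4$. Then the function $u_2\mapsto\lambda_2(a,u_2,b)-\lambda_3(a,u_2,b)$ has exactly one zero $u^*$ in the interval $b<u_2<a$, and this zero is simple. Moreover, $\lambda_2(a,u_2,b)-\lambda_3(a,u_2,b)$ is positive for $u^*<u_2<a$ and negative for $b<u_2<u^*$.
   Context: For $-\nu<u_3<u_2<u_1$ define $$I(u_1,u_2,u_3)=\int_{u_3}^{u_2}\frac{\eta+\nu}{\sqrt{(\eta+\nu)(u_1-\eta)(u_2-\eta)(\eta-u_3)}}\,d\eta,$$ and for $i=1,2,3$ $$\lambda_i=u_1+u_2+u_3+2\nu-\frac{I}{\partial I/\partial u_i}.$$ *)

(* Defs.v *)
From Stdlib Require Import Reals.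
From Coquelicot Require Import Coquelicot.
Open Scope R_scope.

Definition Iint (nu u1 u2 u3 : R) : R :=
  RInt_gen
    (fun eta => (eta + nu) / sqrt ((eta + nu) * (u1 - eta) * (u2 - eta) * (eta - u3)))
    (at_right u3) (at_left u2).

Definition dI1 (nu u1 u2 u3 : R) : R := Derive (fun x => Iint nu x u2 u3) u1.
Definition dI2 (nu u1 u2 u3 : R) : R := Derive (fun x => Iint nu u1 x u3) u2.
Definition dI3 (nu u1 u2 u3 : R) : R := Derive (fun x => Iint nu u1 u2 x) u3.

Definition lambda1 (nu u1 u2 u3 : R) : R :=
  u1 + u2 + u3 + 2 * nu - Iint nu u1 u2 u3 / dI1 nu u1 u2 u3.
Definition lambda2 (nu u1 u2 u3 : R) : R :=
  u1 + u2 + u3 + 2 * nu - Iint nu u1 u2 u3 / dI2 nu u1 u2 u3.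
Definition lambda3 (nu u1 u2 u3 : R) : R :=
  u1 + u2 + u3 + 2 * nu - Iint nu u1 u2 u3 / dI3 nu u1 u2 u3.

(* Main.v *)
Require Import Defs.
From Stdlib Require Import Reals Lra Psatz.
From Coquelicot Require Import Coquelicot.
Open Scope R_scope.

Definition F (nu a e : R) := sqrt (e + nu) / sqrt (a - e).
Definition F1 (nu a e : R) := (a + nu) / (2 * sqrt (e + nu) * ((a - e) * sqrt (a - e))).
Definition F2 (nu a e : R) :=
  (a + nu) * (4 * (e + nu) - (a + nu)) /
  (4 * ((e + nu) * sqrt (e + nu)) * ((a - e) * (a - e) * sqrt (a - e))).

Lemma sqrt_sq_id x : 0 <= x -> sqrt x * sqrt x = x.
Proof. intros; apply sqrt_sqrt; auto. Qed.

Lemma F_der nu a e : -nu < e < a -> is_derive (F nu a) e (F1 nu a e).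
Proof.
  intros [H1 H2]. unfold F, F1.
  auto_derive.
  - repeat split; try lra. apply Rgt_not_eq, sqrt_lt_R0; lra.
  - assert (Hs1 := sqrt_lt_R0 (e+nu) ltac:(lra)).
    assert (Hs2 := sqrt_lt_R0 (a-e) ltac:(lra)).
    assert (E1 := sqrt_sq_id (e+nu) ltac:(lra)).
    assert (E2 := sqrt_sq_id (a-e) ltac:(lra)).
    replace (a + - e) with (a - e) by ring.
    replace (a + nu) with ((e+nu) + (a - e)) by ring.
    set (x := sqrt (e+nu)) in *. set (y := sqrt (a - e)) in *.
    replace ((e+nu) + (a - e)) with (x*x+y*y) by lra.
    replace (a - e) with (y*y) by lra.
    field. lra.
Qed.

Lemma F1_der nu a e : -nu < e < a -> is_derive (F1 nu a) e (F2 nu a e).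
Proof.
  intros [H1 H2]. unfold F1, F2.
  assert (Hs1 := sqrt_lt_R0 (e+nu) ltac:(lra)).
  assert (Hs2 := sqrt_lt_R0 (a-e) ltac:(lra)).
  auto_derive.
  - change (a + - e) with (a - e). repeat split; try lra. apply Rgt_not_eq.
    repeat apply Rmult_lt_0_compat; lra.
  - assert (E1 := sqrt_sq_id (e+nu) ltac:(lra)).
    assert (E2 := sqrt_sq_id (a-e) ltac:(lra)).
    replace (a + - e) with (a - e) by ring.
    set (x := sqrt (e+nu)) in *. set (y := sqrt (a - e)) in *.
    replace (a+nu) with (x*x+y*y) by lra.
    replace (e+nu) with (x*x) by lra.
    replace (a - e) with (y*y) by lra.
    field. lra.
Qed.

Lemma F2_cont nu a e : -nu < e < a -> continuous (F2 nu a) e.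
Proof.
  intros [H1 H2]. apply (ex_derive_continuous (F2 nu a)). unfold F2.
  assert (Hs1 := sqrt_lt_R0 (e+nu) ltac:(lra)).
  assert (Hs2 := sqrt_lt_R0 (a-e) ltac:(lra)).
  auto_derive. change (a + - e) with (a - e). repeat split; try lra. apply Rgt_not_eq.
  repeat apply Rmult_lt_0_compat; lra.
Qed.

Lemma F1_cont nu a e : -nu < e < a -> continuous (F1 nu a) e.
Proof. intros H. apply (ex_derive_continuous (F1 nu a)). eexists. apply F1_der; auto. Qed.
Lemma F_cont nu a e : -nu < e < a -> continuous (F nu a) e.
Proof. intros H. apply (ex_derive_continuous (F nu a)). eexists. apply F_der; auto. Qed.

Lemma F_pos nu a e : -nu < e < a -> 0 < F nu a e.
Proof. intros. unfold F. apply Rdiv_lt_0_compat; apply sqrt_lt_R0; lra. Qed.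
Lemma F1_pos nu a e : -nu < e < a -> 0 < F1 nu a e.
Proof. intros. unfold F1.
  assert (Hs1 := sqrt_lt_R0 (e+nu) ltac:(lra)).
  assert (Hs2 := sqrt_lt_R0 (a-e) ltac:(lra)).
  apply Rdiv_lt_0_compat. lra. repeat apply Rmult_lt_0_compat; lra. Qed.
Lemma F2_sign nu a e : -nu < e < a -> 
  (e < (a - 3*nu)/4 -> F2 nu a e < 0) /\ ((a - 3*nu)/4 < e -> 0 < F2 nu a e).
Proof. intros. unfold F2.
  assert (Hs1 := sqrt_lt_R0 (e+nu) ltac:(lra)).
  assert (Hs2 := sqrt_lt_R0 (a-e) ltac:(lra)).
  assert (0 < 4 * ((e + nu) * sqrt (e + nu)) * ((a - e) * (a - e) * sqrt (a - e))).
  { repeat apply Rmult_lt_0_compat; lra. }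
  split; intros.
  - apply Rdiv_neg_pos; auto. apply Rmult_pos_neg; lra.
  - apply Rdiv_lt_0_compat; auto. apply Rmult_lt_0_compat; lra.
Qed.

Lemma cR_mult (f g : R -> R) x : continuous f x -> continuous g x -> continuous (fun y => f y * g y) x.
Proof. intros. apply (continuous_mult f g); auto. Qed.
Lemma cR_plus (f g : R -> R) x : continuous f x -> continuous g x -> continuous (fun y => f y + g y) x.
Proof. intros. apply (continuous_plus f g); auto. Qed.
Lemma cR_minus (f g : R -> R) x : continuous f x -> continuous g x -> continuous (fun y => f y - g y) x.
Proof. intros. apply (continuous_plus f (fun y => - g y)); auto. apply (continuous_opp g); auto. Qed.
Lemma cR_comp (f g : R -> R) x : continuous f x -> continuous g (f x) -> continuous (fun y => g (f y)) x.
Proof. intros. apply (continuous_comp f g); auto. Qed.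
Lemma cR_const (c x : R) : continuous (fun _ : R => c) x.
Proof. apply continuous_const. Qed.
Lemma cR_id (x : R) : continuous (fun y : R => y) x.
Proof. apply continuous_id. Qed.
Lemma cR_sin x : continuous sin x.
Proof. apply continuity_pt_filterlim. apply continuity_sin. Qed.
Lemma cR_cos x : continuous cos x.
Proof. apply continuity_pt_filterlim. apply continuity_cos. Qed.
Lemma cR_sqrt x : continuous sqrt x.
Proof. apply continuous_sqrt. Qed.

Lemma c2_1d (w : R -> R) x t : continuous w t -> continuity_2d_pt (fun _ v => w v) x t.
Proof.
  intros H. apply (continuity_1d_2d_pt_comp w (fun _ v => v)).
  apply continuity_pt_filterlim; auto. apply continuity_2d_pt_id2.
Qed.

Section Param.
Variables (w al be G G' : R -> R) (lo hi : R).
Hypothesis (Hw : forall t, continuous w t) (Hal : forall t, continuous al t)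
  (Hbe : forall t, continuous be t)
  (HG : forall y, lo < y < hi -> is_derive G y (G' y))
  (HG' : forall y, lo < y < hi -> continuous G' y).

Lemma inner_der t u : lo < al t + u * be t < hi ->
  is_derive (fun u => w t * G (al t + u * be t)) u (w t * be t * G' (al t + u * be t)).
Proof.
  intros H. rewrite Rmult_assoc. apply is_derive_scal.
  apply (is_derive_comp G (fun u => al t + u * be t)). auto.
  auto_derive; auto. ring.
Qed.

Lemma param_der x :
  locally x (fun u => forall t, lo < al t + u * be t < hi) ->
  is_derive (fun u => RInt (fun t => w t * G (al t + u * be t)) 0 (PI/2)) x
    (RInt (fun t => w t * be t * G' (al t + x * be t)) 0 (PI/2)).
Proof.
  intros Hloc.
  assert (Hx : forall t, lo < al t + x * be t < hi).
  { intros t. destruct Hloc as [eps He]. apply He. apply ball_center. }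
  replace (RInt (fun t => w t * be t * G' (al t + x * be t)) 0 (PI/2))
    with (RInt (fun t => Derive (fun u => w t * G (al t + u * be t)) x) 0 (PI/2)).
  2:{ apply RInt_ext. intros t _. apply is_derive_unique. apply inner_der; auto. }
  apply (is_derive_RInt_param (fun u t => w t * G (al t + u * be t))).
  - eapply filter_imp. 2: exact Hloc. intros u Hu t _. eexists. apply inner_der; auto.
  - intros t _.
    destruct Hloc as [eps He].
    apply continuity_2d_pt_ext_loc with (f := fun u v => w v * be v * G' (al v + u * be v)).
    + exists eps. intros u v Hu _. symmetry. apply is_derive_unique. apply inner_der.
      apply He. exact Hu.
    + apply continuity_2d_pt_mult. apply continuity_2d_pt_mult; apply c2_1d; auto.
      apply (continuity_1d_2d_pt_comp G' (fun u v => al v + u * be v)).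
      apply continuity_pt_filterlim. apply HG'. auto.
      apply continuity_2d_pt_plus. apply c2_1d; auto.
      apply continuity_2d_pt_mult. apply continuity_2d_pt_id1. apply c2_1d; auto.
  - eapply filter_imp. 2: exact Hloc. intros u Hu.
    apply (ex_RInt_continuous (V:=R_CompleteNormedModule)). intros t _.
    apply cR_mult. auto. apply cR_comp with (f := fun t => al t + u * be t).
    apply cR_plus. auto. apply cR_mult. apply cR_const. auto.
    apply (ex_derive_continuous G). eexists. apply HG. auto.
Qed.
End Param.

Definition Sn t := sin t * sin t.
Definition Cs t := cos t * cos t.
Definition T nu a u2 u3 := RInt (fun t => 2 * F nu a (u3 * Cs t + u2 * Sn t)) 0 (PI/2).

Lemma SC1 t : Sn t + Cs t = 1.
Proof. unfold Sn, Cs. rewrite <- (sin2_cos2 t). unfold Rsqr. ring. Qed.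
Lemma Sn_range t : 0 <= Sn t <= 1.
Proof. assert (H := SC1 t). unfold Sn, Cs in *. split; nra. Qed.
Lemma Cs_range t : 0 <= Cs t <= 1.
Proof. assert (H := SC1 t). unfold Sn, Cs in *. split; nra. Qed.

Lemma sincos_pos t : 0 < t < PI/2 -> 0 < sin t /\ 0 < cos t.
Proof. intros. split. apply sin_gt_0; lra. apply cos_gt_0; lra. Qed.

Lemma phi_in u2 u3 t : u3 <= u2 -> u3 <= u3 * Cs t + u2 * Sn t <= u2.
Proof. intros. assert (H1 := SC1 t). assert (H2 := Sn_range t). nra. Qed.

Lemma phi_in_strict u2 u3 t : u3 < u2 -> 0 < t < PI/2 -> u3 < u3 * Cs t + u2 * Sn t < u2.
Proof. intros. destruct (sincos_pos t H0). assert (HH := SC1 t).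
  assert (0 < Sn t) by (unfold Sn; nra). assert (0 < Cs t) by (unfold Cs; nra). nra. Qed.

Lemma sqrt_prod_sq X Y : 0 <= X -> 0 <= Y -> sqrt (X * (Y * Y)) = sqrt X * Y.
Proof. intros. rewrite sqrt_mult_alt; auto. rewrite sqrt_square; auto. Qed.

Definition fI nu a u2 u3 (e : R) := (e + nu) / sqrt ((e + nu) * (a - e) * (u2 - e) * (e - u3)).

Lemma key_ident nu a u2 u3 t : -nu < u3 -> u3 < u2 -> u2 < a -> 0 < t < PI/2 ->
  (2 * (u2 - u3) * sin t * cos t) * fI nu a u2 u3 (u3 * Cs t + u2 * Sn t)
  = 2 * F nu a (u3 * Cs t + u2 * Sn t).
Proof.
  intros H1 H2 H3 Ht. destruct (sincos_pos t Ht) as [Hs Hc].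
  assert (Hp := phi_in u2 u3 t ltac:(lra)).
  set (e := u3 * Cs t + u2 * Sn t) in *.
  assert (E : (e + nu) * (a - e) * (u2 - e) * (e - u3) = ((e+nu)*(a-e)) * (((u2-u3)*sin t*cos t) * ((u2-u3)*sin t*cos t))).
  { transitivity (((e+nu)*(a-e)) * ((u2-u3)*(u2-u3)*(Sn t)*(Cs t))).
    unfold e. replace (Cs t) with (1 - Sn t) by (generalize (SC1 t); lra). ring.
    unfold Sn, Cs. ring. }
  assert (0 < u2 - u3) by lra.
  unfold fI, F. rewrite E. rewrite sqrt_prod_sq.
  2:{ apply Rmult_le_pos; lra. }
  2:{ repeat apply Rmult_le_pos; lra. }
  rewrite sqrt_mult_alt; try lra.
  assert (Hs1 := sqrt_lt_R0 (e+nu) ltac:(lra)).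
  assert (Hs2 := sqrt_lt_R0 (a-e) ltac:(lra)).
  assert (E1 := sqrt_sq_id (e+nu) ltac:(lra)).
  set (x := sqrt (e+nu)) in *. set (y := sqrt (a - e)) in *.
  rewrite <- E1. field. repeat split; try lra. 
Qed.

Definition psi1 u2 u3 x := asin (sqrt ((x - u3) / (u2 - u3))).
Definition psi2 u2 u3 y := PI/2 - asin (sqrt ((u2 - y) / (u2 - u3))).

Lemma frac01 u2 u3 x : u3 < u2 -> u3 <= x <= u2 -> 0 <= (x - u3)/(u2 - u3) <= 1.
Proof. intros. split. apply Rdiv_le_0_compat; lra.
  apply Rmult_le_reg_r with (u2 - u3). lra. field_simplify; lra. Qed.

Lemma sqrt01 r : 0 <= r <= 1 -> 0 <= sqrt r <= 1.
Proof. intros. split. apply sqrt_pos. rewrite <- sqrt_1. apply sqrt_le_1_alt. lra. Qed.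

Lemma asin_nonneg r : 0 <= r <= 1 -> 0 <= asin r <= PI/2.
Proof. intros. assert (Hb := asin_bound r). split; [|lra].
  destruct (Rle_or_lt 0 (asin r)); auto.
  assert (sin (asin r) < 0). apply sin_lt_0_var; lra.
  rewrite sin_asin in H1; lra. Qed.

Lemma psi1_prop u2 u3 x : u3 < u2 -> u3 <= x <= u2 ->
  0 <= psi1 u2 u3 x <= PI/2 /\ u3 * Cs (psi1 u2 u3 x) + u2 * Sn (psi1 u2 u3 x) = x.
Proof.
  intros. assert (Hf := frac01 u2 u3 x H H0). assert (Hr := sqrt01 _ Hf).
  unfold psi1. split. apply asin_nonneg; auto.
  replace (Cs (asin (sqrt ((x - u3) / (u2 - u3))))) with (1 - Sn (asin (sqrt ((x - u3) / (u2 - u3)))))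
    by (generalize (SC1 (asin (sqrt ((x - u3) / (u2 - u3))))); lra).
  unfold Sn. rewrite sin_asin by lra. rewrite sqrt_sqrt by lra. field. lra.
Qed.

Lemma psi1_strict u2 u3 x : u3 < u2 -> u3 < x < u2 -> 0 < psi1 u2 u3 x < PI/2.
Proof.
  intros. assert (Hf := frac01 u2 u3 x H ltac:(lra)).
  assert (0 < (x - u3)/(u2 - u3) < 1).
  { split. apply Rdiv_lt_0_compat; lra. apply Rmult_lt_reg_r with (u2 - u3). lra. field_simplify; lra. }
  assert (0 < sqrt ((x - u3)/(u2 - u3)) < 1).
  { split. apply sqrt_lt_R0; lra. rewrite <- sqrt_1. apply sqrt_lt_1_alt. lra. }
  assert (Hb := asin_nonneg (sqrt ((x - u3)/(u2 - u3))) ltac:(lra)).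
  unfold psi1. destruct Hb as [Hb1 Hb2]. split.
  - destruct Hb1 as [|E]; auto. exfalso. 
    assert (Z := sin_asin (sqrt ((x - u3)/(u2 - u3))) ltac:(lra)). rewrite <- E, sin_0 in Z. lra.
  - destruct Hb2 as [|E]; auto. exfalso. 
    assert (Z := sin_asin (sqrt ((x - u3)/(u2 - u3))) ltac:(lra)). rewrite E, sin_PI2 in Z. lra.
Qed.

Lemma psi2_eq u2 u3 y : u3 < u2 -> u3 <= y <= u2 -> psi2 u2 u3 y = psi1 u2 u3 y.
Proof.
  intros. destruct (psi1_prop u2 u3 y H H0) as [Hb Hp].
  set (th := psi1 u2 u3 y) in *.
  assert (Hc : 0 <= cos th). apply cos_ge_0; lra.
  assert (E : (u2 - y) / (u2 - u3) = cos th * cos th).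
  { rewrite <- Hp. replace (Sn th) with (1 - Cs th) by (generalize (SC1 th); lra). unfold Cs. field. lra. }
  unfold psi2. rewrite E, sqrt_square by auto. rewrite <- sin_shift. rewrite asin_sin by lra. ring.
Qed.

Lemma cont_asin0 : continuous asin 0.
Proof. apply continuity_pt_filterlim. apply derivable_continuous_pt. apply derivable_pt_asin. lra. Qed.

Lemma psi1_cont u2 u3 : u3 < u2 -> continuous (psi1 u2 u3) u3.
Proof.
  intros. unfold psi1. apply cR_comp with (f := fun x => sqrt ((x - u3) / (u2 - u3))).
  apply continuous_sqrt_comp. apply cR_mult. apply cR_minus. apply cR_id. apply cR_const. apply cR_const.
  replace ((u3 - u3) / (u2 - u3)) with 0 by (field; lra). rewrite sqrt_0. apply cont_asin0.
Qed.

Lemma psi2_cont u2 u3 : u3 < u2 -> continuous (psi2 u2 u3) u2.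
Proof.
  intros. unfold psi2. apply cR_minus. apply cR_const.
  apply cR_comp with (f := fun x => sqrt ((u2 - x) / (u2 - u3))).
  apply continuous_sqrt_comp. apply cR_mult. apply cR_minus. apply cR_const. apply cR_id. apply cR_const.
  replace ((u2 - u2) / (u2 - u3)) with 0 by (field; lra). rewrite sqrt_0. apply cont_asin0.
Qed.

Lemma psi1_u3 u2 u3 : u3 < u2 -> psi1 u2 u3 u3 = 0.
Proof. intros. unfold psi1. replace ((u3 - u3) / (u2 - u3)) with 0 by (field; lra). rewrite sqrt_0. apply asin_0. Qed.
Lemma psi2_u2 u2 u3 : u3 < u2 -> psi2 u2 u3 u2 = PI/2.
Proof. intros. unfold psi2. replace ((u2 - u2) / (u2 - u3)) with 0 by (field; lra). rewrite sqrt_0, asin_0. ring. Qed.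

Lemma fI_cont nu a u2 u3 e : -nu < u3 -> u2 < a -> u3 < e < u2 -> continuous (fI nu a u2 u3) e.
Proof.
  intros. apply (ex_derive_continuous (fI nu a u2 u3)). unfold fI.
  assert (0 < (e + nu) * (a - e) * (u2 - e) * (e - u3)) by (repeat apply Rmult_lt_0_compat; lra).
  auto_derive. split; auto. split; auto. apply Rgt_not_eq, sqrt_lt_R0; auto.
Qed.

Lemma phi_der u2 u3 t : is_derive (fun t => u3 * Cs t + u2 * Sn t) t (2 * (u2 - u3) * sin t * cos t).
Proof. unfold Cs, Sn. auto_derive; auto. ring. Qed.

Lemma dphi_cont u2 u3 t : continuous (fun t => 2 * (u2 - u3) * sin t * cos t) t.
Proof. apply cR_mult. apply cR_mult. apply cR_const. apply cR_sin. apply cR_cos. Qed.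

Lemma h_cont nu a u2 u3 t : -nu < u3 -> u3 <= u2 -> u2 < a ->
  continuous (fun t => 2 * F nu a (u3 * Cs t + u2 * Sn t)) t.
Proof.
  intros. apply cR_mult. apply cR_const.
  apply cR_comp with (f := fun t => u3 * Cs t + u2 * Sn t).
  apply (ex_derive_continuous (fun t => u3 * Cs t + u2 * Sn t)). eexists. apply phi_der.
  apply F_cont. generalize (phi_in u2 u3 t H0). lra.
Qed.

Lemma piece nu a u2 u3 x y : -nu < u3 -> u3 < u2 -> u2 < a -> u3 < x < u2 -> u3 < y < u2 ->
  is_RInt (fI nu a u2 u3) x y
    (RInt (fun t => 2 * F nu a (u3 * Cs t + u2 * Sn t)) (psi1 u2 u3 x) (psi1 u2 u3 y)).
Proof.
  intros H1 H2 H3 Hx Hy.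
  destruct (psi1_prop u2 u3 x H2 ltac:(lra)) as [_ Px].
  destruct (psi1_prop u2 u3 y H2 ltac:(lra)) as [_ Py].
  assert (Bx := psi1_strict u2 u3 x H2 Hx).
  assert (By := psi1_strict u2 u3 y H2 Hy).
  set (p := psi1 u2 u3 x) in *. set (q := psi1 u2 u3 y) in *.
  assert (Hin : forall t, Rmin p q <= t <= Rmax p q -> 0 < t < PI/2).
  { intros t Ht. unfold Rmin, Rmax in Ht. destruct (Rle_dec p q); lra. }
  assert (EQ := RInt_comp (V:=R_CompleteNormedModule) (fI nu a u2 u3) (fun t => u3 * Cs t + u2 * Sn t)
     (fun t => 2 * (u2 - u3) * sin t * cos t) p q).
  simpl in EQ. rewrite Px, Py in EQ.
  assert (EQ2 : RInt (fI nu a u2 u3) x y = RInt (fun t => 2 * F nu a (u3 * Cs t + u2 * Sn t)) p q).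
  { rewrite <- EQ. 
    - apply RInt_ext. intros t Ht. apply key_ident; auto. apply Hin. lra.
    - intros t Ht. apply fI_cont; auto. apply phi_in_strict; auto.
    - intros t Ht. split. apply phi_der. apply dphi_cont. }
  rewrite <- EQ2.
  apply (RInt_correct (V:=R_CompleteNormedModule)).
  apply (ex_RInt_continuous (V:=R_CompleteNormedModule)). intros z Hz. apply fI_cont; auto.
  unfold Rmin, Rmax in Hz. destruct (Rle_dec x y); lra.
Qed.

Lemma prod_loc (x y : R) (P : R * R -> Prop) : locally (x,y) P -> filter_prod (locally x) (locally y) P.
Proof. intros [e He]. apply Filter_prod with (ball x e) (ball y e).
  exists e; auto. exists e; auto. intros u v Hu Hv. apply He. split; auto. Qed.

Lemma right_le (f : R -> R) x : continuous f x -> filterlim f (at_right x) (locally (f x)).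
Proof. intros H P HP. specialize (H P HP). unfold filtermap in *.
  unfold at_right, within. eapply filter_imp. 2: exact H. intros; auto. Qed.
Lemma left_le (f : R -> R) x : continuous f x -> filterlim f (at_left x) (locally (f x)).
Proof. intros H P HP. specialize (H P HP). unfold filtermap in *.
  unfold at_left, within. eapply filter_imp. 2: exact H. intros; auto. Qed.

Lemma right_in u3 u2 : u3 < u2 -> at_right u3 (fun x => u3 < x < u2).
Proof. intros. unfold at_right, within. assert (0 < u2 - u3) by lra.
  exists (mkposreal _ H0). intros y Hy Hy2. simpl in Hy. change (Rabs (y - u3) < u2 - u3) in Hy.
  apply Rabs_def2 in Hy. lra. Qed.
Lemma left_in u3 u2 : u3 < u2 -> at_left u2 (fun x => u3 < x < u2).
Proof. intros. unfold at_left, within. assert (0 < u2 - u3) by lra.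
  exists (mkposreal _ H0). intros y Hy Hy2. simpl in Hy. change (Rabs (y - u2) < u2 - u3) in Hy.
  apply Rabs_def2 in Hy. lra. Qed.

Lemma Iint_gen nu a u2 u3 : -nu < u3 -> u3 < u2 -> u2 < a ->
  is_RInt_gen (fI nu a u2 u3) (at_right u3) (at_left u2) (T nu a u2 u3).
Proof.
  intros H1 H2 H3.
  set (h := fun t => 2 * F nu a (u3 * Cs t + u2 * Sn t)).
  set (G := fun p q => RInt h p q).
  assert (Lim : filterlim (fun ab : R * R => G (psi1 u2 u3 (fst ab)) (psi2 u2 u3 (snd ab)))
                  (filter_prod (at_right u3) (at_left u2)) (locally (T nu a u2 u3))).
  { apply filterlim_comp with (G := locally (0, PI/2)) (f := fun ab : R * R => (psi1 u2 u3 (fst ab), psi2 u2 u3 (snd ab)))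
      (g := fun z : R * R => G (fst z) (snd z)).
    - intros P HP. apply prod_loc in HP. destruct HP as [Q R0 HQ HR HQR].
      unfold filtermap.
      apply Filter_prod with (fun x => Q (psi1 u2 u3 x)) (fun y => R0 (psi2 u2 u3 y)).
      + apply right_le. apply psi1_cont; auto. rewrite psi1_u3; auto.
      + apply left_le. apply psi2_cont; auto. rewrite psi2_u2; auto.
      + intros x y Hx Hy. simpl. apply HQR; auto.
    - apply (continuous_RInt h 0 (PI/2) G). apply filter_forall. intros z.
      apply (RInt_correct (V:=R_CompleteNormedModule)).
      apply (ex_RInt_continuous (V:=R_CompleteNormedModule)). intros t _.
      apply h_cont; lra. }
  intros P HP. specialize (Lim P HP). unfold filtermapi, filtermap in *.
  assert (Ev : filter_prod (at_right u3) (at_left u2) (fun ab : R * R => u3 < fst ab < u2 /\ u3 < snd ab < u2)).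
  { apply Filter_prod with (fun x => u3 < x < u2) (fun x => u3 < x < u2).
    apply right_in; auto. apply left_in; auto. intros; simpl; auto. }
  generalize (filter_and _ _ Lim Ev). apply filter_imp.
  intros [x y] [HPxy [Hx Hy]]. simpl in *.
  exists (G (psi1 u2 u3 x) (psi2 u2 u3 y)). split; auto.
  rewrite psi2_eq; try lra. apply piece; auto.
Qed.

Lemma Iint_T nu a u2 u3 : -nu < u3 -> u3 < u2 -> u2 < a -> Iint nu a u2 u3 = T nu a u2 u3.
Proof.
  intros. unfold Iint. apply (is_RInt_gen_unique (V:=R_CompleteNormedModule) (fI nu a u2 u3)).
  apply Iint_gen; auto.
Qed.

Definition dT2 nu a u2 u3 := RInt (fun t => 2 * Sn t * F1 nu a (u3 * Cs t + u2 * Sn t)) 0 (PI/2).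
Definition dT3 nu a u2 u3 := RInt (fun t => 2 * Cs t * F1 nu a (u3 * Cs t + u2 * Sn t)) 0 (PI/2).
Definition d2T2 nu a u2 u3 := RInt (fun t => 2 * Sn t * Sn t * F2 nu a (u3 * Cs t + u2 * Sn t)) 0 (PI/2).
Definition d2T3 nu a u2 u3 := RInt (fun t => 2 * Cs t * Sn t * F2 nu a (u3 * Cs t + u2 * Sn t)) 0 (PI/2).

Lemma conv_in nu a p q t : -nu < p < a -> -nu < q < a -> -nu < p * Cs t + q * Sn t < a.
Proof. intros. assert (H1 := SC1 t). assert (H2 := Sn_range t).
  replace (Cs t) with (1 - Sn t) by lra. set (s := Sn t) in *.
  destruct (Rle_or_lt p q).
  - assert (0 <= (q - p) * s) by (apply Rmult_le_pos; lra).
    assert ((q - p) * s <= (q - p)) by nra. nra.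
  - assert (0 <= (p - q) * s) by (apply Rmult_le_pos; lra).
    assert ((p - q) * s <= (p - q)) by nra. nra.
Qed.

Lemma loc_in lo hi x : lo < x < hi -> locally x (fun u => lo < u < hi).
Proof. intros. assert (0 < Rmin (x - lo) (hi - x)) by (apply Rmin_pos; lra).
  exists (mkposreal _ H0). intros y Hy. change (Rabs (y - x) < Rmin (x - lo) (hi - x)) in Hy.
  apply Rabs_def2 in Hy. assert (Rmin (x - lo) (hi - x) <= x - lo) by apply Rmin_l.
  assert (Rmin (x - lo) (hi - x) <= hi - x) by apply Rmin_r. lra. Qed.

Lemma cSn t : continuous Sn t.
Proof. apply cR_mult; apply cR_sin. Qed.
Lemma cCs t : continuous Cs t.
Proof. apply cR_mult; apply cR_cos. Qed.

Lemma T_der2 nu a u2 u3 : -nu < u3 < a -> -nu < u2 < a ->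
  is_derive (fun x => T nu a x u3) u2 (dT2 nu a u2 u3).
Proof.
  intros. unfold T, dT2.
  apply (param_der (fun _ => 2) (fun t => u3 * Cs t) Sn (F nu a) (F1 nu a) (-nu) a).
  - intros; apply cR_const.
  - intros; apply cR_mult. apply cR_const. apply cCs.
  - apply cSn.
  - intros; apply F_der; auto.
  - intros; apply F1_cont; auto.
  - eapply filter_imp. 2: apply (loc_in (-nu) a u2); auto. intros u Hu t. apply conv_in; auto.
Qed.

Lemma T_der3 nu a u2 u3 : -nu < u3 < a -> -nu < u2 < a ->
  is_derive (fun x => T nu a u2 x) u3 (dT3 nu a u2 u3).
Proof.
  intros. unfold T, dT3.
  apply is_derive_ext with (f := fun x => RInt (fun t => 2 * F nu a (u2 * Sn t + x * Cs t)) 0 (PI/2)).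
  { intros x. apply RInt_ext. intros. f_equal. f_equal. ring. }
  replace (RInt (fun t => 2 * Cs t * F1 nu a (u3 * Cs t + u2 * Sn t)) 0 (PI / 2))
   with (RInt (fun t => 2 * Cs t * F1 nu a (u2 * Sn t + u3 * Cs t)) 0 (PI / 2)).
  2:{ apply RInt_ext. intros. f_equal. f_equal. ring. }
  apply (param_der (fun _ => 2) (fun t => u2 * Sn t) Cs (F nu a) (F1 nu a) (-nu) a).
  - intros; apply cR_const.
  - intros; apply cR_mult. apply cR_const. apply cSn.
  - apply cCs.
  - intros; apply F_der; auto.
  - intros; apply F1_cont; auto.
  - eapply filter_imp. 2: apply (loc_in (-nu) a u3); auto. intros u Hu t.
    rewrite Rplus_comm. apply conv_in; auto.
Qed.

Lemma dT2_der nu a u2 u3 : -nu < u3 < a -> -nu < u2 < a ->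
  is_derive (fun x => dT2 nu a x u3) u2 (d2T2 nu a u2 u3).
Proof.
  intros. unfold dT2, d2T2.
  apply (param_der (fun t => 2 * Sn t) (fun t => u3 * Cs t) Sn (F1 nu a) (F2 nu a) (-nu) a).
  - intros; apply cR_mult. apply cR_const. apply cSn.
  - intros; apply cR_mult. apply cR_const. apply cCs.
  - apply cSn.
  - intros; apply F1_der; auto.
  - intros; apply F2_cont; auto.
  - eapply filter_imp. 2: apply (loc_in (-nu) a u2); auto. intros u Hu t. apply conv_in; auto.
Qed.

Lemma dT3_der nu a u2 u3 : -nu < u3 < a -> -nu < u2 < a ->
  is_derive (fun x => dT3 nu a x u3) u2 (d2T3 nu a u2 u3).
Proof.
  intros. unfold dT3, d2T3.
  apply (param_der (fun t => 2 * Cs t) (fun t => u3 * Cs t) Sn (F1 nu a) (F2 nu a) (-nu) a).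
  - intros; apply cR_mult. apply cR_const. apply cCs.
  - intros; apply cR_mult. apply cR_const. apply cCs.
  - apply cSn.
  - intros; apply F1_der; auto.
  - intros; apply F2_cont; auto.
  - eapply filter_imp. 2: apply (loc_in (-nu) a u2); auto. intros u Hu t. apply conv_in; auto.
Qed.

Lemma exR (f : R -> R) a b : (forall t, continuous f t) -> ex_RInt f a b.
Proof. intros. apply (ex_RInt_continuous (V:=R_CompleteNormedModule)). intros; auto. Qed.

Lemma dI2_eq nu a u b : -nu < b -> b < u < a -> dI2 nu a u b = dT2 nu a u b.
Proof.
  intros. unfold dI2. apply is_derive_unique.
  apply is_derive_ext_loc with (fun x => T nu a x b).
  - eapply filter_imp. 2: apply (loc_in b a u); lra. intros x Hx. symmetry. apply Iint_T; lra.
  - apply T_der2; lra.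
Qed.

Lemma dI3_eq nu a u b : -nu < b -> b < u < a -> dI3 nu a u b = dT3 nu a u b.
Proof.
  intros. unfold dI3. apply is_derive_unique.
  apply is_derive_ext_loc with (fun x => T nu a u x).
  - eapply filter_imp. 2: apply (loc_in (-nu) u b); lra. intros x Hx. symmetry. apply Iint_T; lra.
  - apply T_der3; lra.
Qed.

Lemma eta_cont b u t : continuous (fun t => b * Cs t + u * Sn t) t.
Proof. apply cR_plus; apply cR_mult; try apply cR_const. apply cCs. apply cSn. Qed.

Lemma T_pos nu a u b : -nu < b -> b < u < a -> 0 < T nu a u b.
Proof.
  intros. unfold T. apply RInt_gt_0. apply PI2_RGT_0 || (generalize PI_RGT_0; lra).
  - intros. apply Rmult_lt_0_compat. lra. apply F_pos. apply conv_in; lra.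
  - intros. apply h_cont; lra.
Qed.

Lemma dT2_pos nu a u b : -nu < b -> b < u < a -> 0 < dT2 nu a u b.
Proof.
  intros. unfold dT2. apply RInt_gt_0. generalize PI_RGT_0; lra.
  - intros t Ht. destruct (sincos_pos t Ht). apply Rmult_lt_0_compat. apply Rmult_lt_0_compat. lra.
    unfold Sn; nra. apply F1_pos. apply conv_in; lra.
  - intros. apply cR_mult. apply cR_mult. apply cR_const. apply cSn.
    apply cR_comp with (f := fun t => b * Cs t + u * Sn t). apply eta_cont. apply F1_cont. apply conv_in; lra.
Qed.

Lemma dT3_pos nu a u b : -nu < b -> b < u < a -> 0 < dT3 nu a u b.
Proof.
  intros. unfold dT3. apply RInt_gt_0. generalize PI_RGT_0; lra.
  - intros t Ht. destruct (sincos_pos t Ht). apply Rmult_lt_0_compat. apply Rmult_lt_0_compat. lra.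
    unfold Cs; nra. apply F1_pos. apply conv_in; lra.
  - intros. apply cR_mult. apply cR_mult. apply cR_const. apply cCs.
    apply cR_comp with (f := fun t => b * Cs t + u * Sn t). apply eta_cont. apply F1_cont. apply conv_in; lra.
Qed.

Lemma RInt_neg (f : R->R) a b : ex_RInt f a b -> RInt (fun t => - f t) a b = - RInt f a b.
Proof. intros. exact (RInt_opp (V:=R_CompleteNormedModule) f a b H). Qed.
Lemma RInt_sc (f : R->R) k a b : ex_RInt f a b -> RInt (fun t => k * f t) a b = k * RInt f a b.
Proof. intros. exact (RInt_scal (V:=R_CompleteNormedModule) f a b k H). Qed.
Lemma RInt_mi (f g : R->R) a b : ex_RInt f a b -> ex_RInt g a b -> RInt (fun t => f t - g t) a b = RInt f a b - RInt g a b.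
Proof. intros. exact (RInt_minus (V:=R_CompleteNormedModule) f g a b H H0). Qed.

Lemma RInt_extR (f g : R -> R) a b : (forall x, Rmin a b < x < Rmax a b -> f x = g x) -> RInt f a b = RInt g a b.
Proof. intros. apply RInt_ext. exact H. Qed.

Lemma c_sc k t : continuous (fun t => k * sin t * cos t) t.
Proof. apply cR_mult. apply cR_mult. apply cR_const. apply cR_sin. apply cR_cos. Qed.

Lemma cF1eta nu a b u t : -nu < b < a -> -nu < u < a ->
  continuous (fun t => F1 nu a (b * Cs t + u * Sn t)) t.
Proof. intros. apply cR_comp with (f := fun t => b * Cs t + u * Sn t). apply eta_cont. apply F1_cont. apply conv_in; lra. Qed.
Lemma cF2eta nu a b u t : -nu < b < a -> -nu < u < a ->
  continuous (fun t => F2 nu a (b * Cs t + u * Sn t)) t.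
Proof. intros. apply cR_comp with (f := fun t => b * Cs t + u * Sn t). apply eta_cont. apply F2_cont. apply conv_in; lra. Qed.

Lemma IBP nu a u b : -nu < b -> b < u < a ->
  RInt (fun t => 2 * (Sn t - Cs t) * F1 nu a (b * Cs t + u * Sn t)) 0 (PI/2)
  = RInt (fun t => 4 * (u - b) * Sn t * Cs t * F2 nu a (b * Cs t + u * Sn t)) 0 (PI/2).
Proof.
  intros Hb Hu.
  set (f := fun t => -2 * sin t * cos t).
  set (f' := fun t => 2 * (Sn t - Cs t)).
  set (g := fun t => F1 nu a (b * Cs t + u * Sn t)).
  set (g' := fun t => 2 * (u - b) * sin t * cos t * F2 nu a (b * Cs t + u * Sn t)).
  assert (Hl : is_RInt (fun t => scal (f t) (g' t)) 0 (PI/2) (RInt (fun t => scal (f t) (g' t)) 0 (PI/2))).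
  { apply (RInt_correct (V:=R_CompleteNormedModule)). apply exR. intros t. unfold f, g'.
    apply cR_mult; [apply c_sc|].
    apply cR_mult; [|apply cF2eta; lra].
    apply c_sc. }
  assert (K := is_RInt_scal_derive_l (V:=R_CompleteNormedModule) f g f' g' 0 (PI/2) (RInt (fun t => scal (f t) (g' t)) 0 (PI/2))).
  assert (K2 : is_RInt (fun t => scal (f' t) (g t)) 0 (PI/2)
       (minus (minus (scal (f (PI/2)) (g (PI/2))) (scal (f 0) (g 0))) (RInt (fun t => scal (f t) (g' t)) 0 (PI/2)))).
  { apply K; [ | | | | exact Hl].
    - intros. unfold f, f', Sn, Cs. auto_derive; auto. ring.
    - intros. unfold g, g'. apply (is_derive_comp (F1 nu a) (fun t => b * Cs t + u * Sn t)).
      apply F1_der. apply conv_in; lra. apply phi_der.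
    - intros. unfold f'. apply cR_mult. apply cR_const. apply cR_minus. apply cSn. apply cCs.
    - intros. unfold g'. apply cR_mult; [|apply cF2eta; lra].
      apply c_sc. }
  apply (is_RInt_unique (V:=R_CompleteNormedModule)) in K2.
  unfold f at 1 2 in K2. rewrite cos_PI2, sin_0 in K2.
  change (RInt (fun t => f' t * g t) 0 (PI/2) = 
     (-2 * sin (PI/2) * 0 * g (PI/2) - -2 * 0 * cos 0 * g 0) - RInt (fun t => scal (f t) (g' t)) 0 (PI/2)) in K2.
  unfold f', g in K2. rewrite K2.
  assert (EQ : RInt (fun t => 4 * (u - b) * Sn t * Cs t * F2 nu a (b * Cs t + u * Sn t)) 0 (PI/2)
     = RInt (fun t => - (f t * g' t)) 0 (PI/2)).
  { apply RInt_extR. intros t _. unfold f, g', Sn, Cs. ring. }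
  rewrite RInt_neg in EQ.
  2:{ apply exR. intros t. unfold f, g'.
    apply cR_mult; [apply c_sc|].
    apply cR_mult; [|apply cF2eta; lra].
    apply c_sc. }
  rewrite EQ. replace (RInt (fun t => scal (f t) (g' t)) 0 (PI/2)) with (RInt (fun t => f t * g' t) 0 (PI/2)).
  match goal with |- ?x = ?y => change (@eq R x y) end. ring. apply RInt_extR. intros; reflexivity.
Qed.

Definition Hf nu a b u := RInt (fun x => F2 nu a x * sqrt ((x - b) * (u - x))) b u.

Lemma k_cont nu a b u x : -nu < b -> b <= x <= u -> u < a ->
  continuous (fun x => F2 nu a x * sqrt ((x - b) * (u - x))) x.
Proof. intros. apply cR_mult. apply F2_cont; lra. apply continuous_sqrt_comp.
  apply cR_mult; apply cR_minus; try apply cR_id; apply cR_const. Qed.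

Lemma subst nu a u b : -nu < b -> b < u < a ->
  RInt (fun t => 4 * (u - b) * Sn t * Cs t * F2 nu a (b * Cs t + u * Sn t)) 0 (PI/2)
  = 2 * Hf nu a b u / (u - b).
Proof.
  intros Hb Hu.
  set (k := fun x => F2 nu a x * sqrt ((x - b) * (u - x))).
  assert (EQ := RInt_comp (V:=R_CompleteNormedModule) k (fun t => b * Cs t + u * Sn t)
     (fun t => 2 * (u - b) * sin t * cos t) 0 (PI/2)).
  simpl in EQ.
  assert (E0 : b * Cs 0 + u * Sn 0 = b) by (unfold Cs, Sn; rewrite cos_0, sin_0; ring).
  assert (E1 : b * Cs (PI/2) + u * Sn (PI/2) = u) by (unfold Cs, Sn; rewrite cos_PI2, sin_PI2; ring).
  rewrite E0, E1 in EQ.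
  assert (PI2 : 0 < PI/2) by (generalize PI_RGT_0; lra).
  assert (Hr : forall t, Rmin 0 (PI/2) <= t <= Rmax 0 (PI/2) -> 0 <= t <= PI/2).
  { intros t Ht. rewrite Rmin_left, Rmax_right in Ht; lra. }
  specialize (EQ ltac:(intros t Ht; apply k_cont; try lra; apply phi_in; lra)
                 ltac:(intros t Ht; split; [apply phi_der | apply dphi_cont])).
  unfold Hf. fold k. rewrite <- EQ.
  transitivity (RInt (fun t => (2 / (u - b)) * ((2 * (u - b) * sin t * cos t) * k (b * Cs t + u * Sn t))) 0 (PI/2)).
  - apply RInt_extR. intros t Ht. rewrite Rmin_left, Rmax_right in Ht; try lra.
    destruct (sincos_pos t Ht) as [Hs Hc].
    unfold k. 
    replace ((b * Cs t + u * Sn t - b) * (u - (b * Cs t + u * Sn t))) with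
        (((u - b) * sin t * cos t) * ((u - b) * sin t * cos t)).
    2:{ transitivity ((u-b)*(u-b)*Sn t*Cs t). unfold Sn, Cs; ring.
        replace (Cs t) with (1 - Sn t) by (generalize (SC1 t); lra). ring. }
    rewrite sqrt_square. 2:{ repeat apply Rmult_le_pos; lra. }
    unfold Sn, Cs. field. lra.
  - rewrite RInt_sc. 2:{ apply exR. intros t. apply cR_mult. apply c_sc.
      apply cR_comp with (f := fun t => b * Cs t + u * Sn t). apply eta_cont.
      apply k_cont; try lra. apply phi_in; lra. }
    match goal with |- ?x = ?y => change (@eq R x y) end.
    replace (RInt (fun t => 2 * (u - b) * sin t * cos t * k (b * Cs t + u * Sn t)) 0 (PI / 2))
     with (RInt (fun t => scal (2 * (u - b) * sin t * cos t) (k (b * Cs t + u * Sn t))) 0 (PI / 2)).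
    assert (HX : forall X : R, 2 / (u - b) * X = 2 * X / (u - b)) by (intros; field; lra). apply HX. apply RInt_extR. intros; reflexivity.
Qed.

Lemma Dl_eq nu a u b : -nu < b -> b < u < a ->
  dT2 nu a u b - dT3 nu a u b = 2 * Hf nu a b u / (u - b).
Proof.
  intros. rewrite <- subst; auto. rewrite <- IBP; auto. unfold dT2, dT3.
  rewrite <- RInt_mi.
  - apply RInt_extR. intros. ring.
  - apply exR. intros t. apply cR_mult. apply cR_mult. apply cR_const. apply cSn. apply cF1eta; lra.
  - apply exR. intros t. apply cR_mult. apply cR_mult. apply cR_const. apply cCs. apply cF1eta; lra.
Qed.

Lemma exk nu a b u p q : -nu < b -> b <= p <= u -> b <= q <= u -> u < a ->
  ex_RInt (fun x => F2 nu a x * sqrt ((x - b) * (u - x))) p q.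
Proof. intros. apply (ex_RInt_continuous (V:=R_CompleteNormedModule)). intros z Hz.
  apply k_cont; try lra. unfold Rmin, Rmax in Hz. destruct (Rle_dec p q); lra. Qed.

Lemma H_neg nu a b u : -nu < b -> b < u -> u <= (a - 3*nu)/4 -> u < a -> Hf nu a b u < 0.
Proof.
  intros. unfold Hf.
  apply Rlt_le_trans with (RInt (fun _ => 0) b u).
  - apply RInt_lt; auto.
    + intros. apply cR_const.
    + intros. apply k_cont; lra.
    + intros x Hx. assert (F2 nu a x < 0) by (apply F2_sign; lra).
      assert (0 < sqrt ((x - b) * (u - x))) by (apply sqrt_lt_R0; nra). nra.
  - rewrite RInt_const. unfold scal; simpl. unfold mult; simpl. lra.
Qed.

Definition rho b x0 x U := sqrt (x - b) * sqrt ((U - x) / (U - x0)).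

Lemma rho_cont b x0 U x : continuous (fun x => rho b x0 x U) x.
Proof. unfold rho. apply cR_mult; apply continuous_sqrt_comp.
  apply cR_minus. apply cR_id. apply cR_const.
  apply cR_mult. apply cR_minus. apply cR_const. apply cR_id. apply cR_const. Qed.

Lemma exrho nu a b x0 U p q : -nu < b -> b <= p <= U -> b <= q <= U -> U < a ->
  ex_RInt (fun x => F2 nu a x * rho b x0 x U) p q.
Proof. intros. apply (ex_RInt_continuous (V:=R_CompleteNormedModule)). intros z Hz.
  apply cR_mult. apply F2_cont. unfold Rmin, Rmax in Hz. destruct (Rle_dec p q); lra.
  apply rho_cont. Qed.

Lemma R_form nu a b x0 U : -nu < b -> b < x0 -> x0 < U -> U < a ->
  Hf nu a b U / sqrt (U - x0) = RInt (fun x => F2 nu a x * rho b x0 x U) b U.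
Proof.
  intros. unfold Hf, Rdiv. rewrite Rmult_comm. rewrite <- RInt_sc.
  2:{ apply exk; lra. }
  apply RInt_extR. intros x Hx. rewrite Rmin_left, Rmax_right in Hx; try lra.
  unfold rho. rewrite sqrt_mult_alt by lra. rewrite sqrt_div_alt by lra.
  assert (0 < sqrt (U - x0)) by (apply sqrt_lt_R0; lra). field. lra.
Qed.

Lemma sqrt_diff p1 p2 : 0 <= p1 <= p2 -> p2 <= 1 -> sqrt p2 - sqrt p1 >= (p2 - p1) / 2.
Proof.
  intros. assert (E1 := sqrt_sqrt p1 ltac:(lra)). assert (E2 := sqrt_sqrt p2 ltac:(lra)).
  assert (0 <= sqrt p1) by apply sqrt_pos. assert (0 <= sqrt p2) by apply sqrt_pos.
  assert (sqrt p2 <= 1) by (rewrite <- sqrt_1; apply sqrt_le_1_alt; lra).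
  assert (sqrt p1 <= sqrt p2) by (apply sqrt_le_1_alt; lra).
  nra.
Qed.

Lemma rho_pt b x0 x u1 u2 a : b < x0 -> x0 < x < u1 -> u1 < u2 -> u2 < a ->
  rho b x0 x u2 - rho b x0 x u1 >= sqrt (x0 - b) * (u2 - u1) * (x - x0) / (2 * (u1 - x0) * (a - x0)).
Proof.
  intros. unfold rho.
  set (p1 := (u1 - x) / (u1 - x0)). set (p2 := (u2 - x) / (u2 - x0)).
  assert (Ed : p2 - p1 = (x - x0) * (u2 - u1) / ((u1 - x0) * (u2 - x0))) by (unfold p1, p2; field; lra).
  assert (0 <= p1) by (unfold p1; apply Rdiv_le_0_compat; lra).
  assert (0 <= p2 - p1) by (rewrite Ed; apply Rdiv_le_0_compat; nra).
  assert (p2 <= 1) by (unfold p2; apply Rmult_le_reg_r with (u2 - x0); [lra|]; field_simplify; lra).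
  assert (Hs := sqrt_diff p1 p2 ltac:(lra) ltac:(lra)).
  assert (Hb : sqrt (x0 - b) <= sqrt (x - b)) by (apply sqrt_le_1_alt; lra).
  assert (0 <= sqrt (x0 - b)) by apply sqrt_pos.
  assert (Hd : (x - x0) * (u2 - u1) / ((u1 - x0) * (a - x0)) <= p2 - p1).
  { rewrite Ed. apply Rmult_le_compat_l. nra. apply Rinv_le_contravar. nra.
    apply Rmult_le_compat_l; lra. }
  assert (0 <= (x - x0) * (u2 - u1) / ((u1 - x0) * (a - x0))) by (apply Rdiv_le_0_compat; nra).
  replace (sqrt (x0 - b) * (u2 - u1) * (x - x0) / (2 * (u1 - x0) * (a - x0)))
    with (sqrt (x0 - b) * (((x - x0) * (u2 - u1) / ((u1 - x0) * (a - x0))) / 2)) by (field; lra).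
  assert (sqrt p2 - sqrt p1 >= 0) by lra.
  rewrite <- Rmult_minus_distr_l.
  apply Rle_ge. apply Rle_trans with (sqrt (x0 - b) * (sqrt p2 - sqrt p1)).
  apply Rmult_le_compat_l; lra. apply Rmult_le_compat_r; lra.
Qed.

Lemma rho_dec b x0 x u1 u2 : b < x <= x0 -> x0 < u1 -> u1 < u2 -> rho b x0 x u2 <= rho b x0 x u1.
Proof.
  intros. unfold rho. apply Rmult_le_compat_l. apply sqrt_pos. apply sqrt_le_1_alt.
  apply Rmult_le_reg_r with ((u1 - x0) * (u2 - x0)). nra.
  field_simplify; try lra. nra.
Qed.

Definition Qf nu a x0 u1 := RInt (fun x => F2 nu a x * (x - x0)) x0 u1.

Lemma Qf_pos nu a u1 : let x0 := (a - 3*nu)/4 in -nu < x0 -> x0 < u1 -> u1 < a -> 0 < Qf nu a x0 u1.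
Proof.
  intros x0 H0 H1 H2. unfold Qf. apply RInt_gt_0; auto.
  - intros x Hx. apply Rmult_lt_0_compat. apply F2_sign; unfold x0 in *; lra. lra.
  - intros x Hx. apply cR_mult. apply F2_cont; lra. apply cR_minus. apply cR_id. apply cR_const.
Qed.

Lemma R_incr nu a b u1 u2 : let x0 := (a - 3*nu)/4 in
  -nu < b -> b < x0 -> x0 < u1 -> u1 < u2 -> u2 < a ->
  Hf nu a b u2 / sqrt (u2 - x0) - Hf nu a b u1 / sqrt (u1 - x0) >=
  sqrt (x0 - b) * Qf nu a x0 u1 * (u2 - u1) / (2 * (u1 - x0) * (a - x0)).
Proof.
  intros x0 Hb Hbx H1 H12 H2.
  rewrite !R_form; try lra.
  set (f2 := fun x => F2 nu a x * rho b x0 x u2).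
  set (f1 := fun x => F2 nu a x * rho b x0 x u1).
  assert (C1 : RInt f2 b u2 = RInt f2 b u1 + RInt f2 u1 u2).
  { symmetry. apply (RInt_Chasles (V:=R_CompleteNormedModule) f2 b u1 u2); apply exrho; lra. }
  assert (P1 : 0 <= RInt f2 u1 u2).
  { apply RInt_ge_0. lra. apply exrho; lra. intros x Hx. unfold f2.
    apply Rmult_le_pos. left. apply F2_sign; unfold x0 in *; lra.
    unfold rho. apply Rmult_le_pos; apply sqrt_pos. }
  set (d := fun x => F2 nu a x * (rho b x0 x u2 - rho b x0 x u1)).
  assert (exd : forall p q, b <= p <= u1 -> b <= q <= u1 -> ex_RInt d p q).
  { intros. apply (ex_RInt_continuous (V:=R_CompleteNormedModule)). intros z Hz.
    apply cR_mult. apply F2_cont. unfold Rmin, Rmax in Hz. destruct (Rle_dec p q); lra.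
    apply cR_minus; apply rho_cont. }
  assert (C2 : RInt f2 b u1 - RInt f1 b u1 = RInt d b x0 + RInt d x0 u1).
  { rewrite <- RInt_mi. 2,3: apply exrho; lra.
    transitivity (RInt d b u1). apply RInt_extR. intros. unfold d, f1, f2. ring.
    symmetry. apply (RInt_Chasles (V:=R_CompleteNormedModule) d b x0 u1); apply exd; lra. }
  assert (P2 : 0 <= RInt d b x0).
  { apply RInt_ge_0. lra. apply exd; lra. intros x Hx. unfold d.
    assert (F2 nu a x < 0) by (apply F2_sign; unfold x0 in *; lra).
    assert (rho b x0 x u2 <= rho b x0 x u1) by (apply rho_dec; lra). nra. }
  set (kap := sqrt (x0 - b) * (u2 - u1) / (2 * (u1 - x0) * (a - x0))).
  assert (P3 : kap * Qf nu a x0 u1 <= RInt d x0 u1).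
  { unfold Qf. rewrite <- RInt_sc.
    2:{ apply (ex_RInt_continuous (V:=R_CompleteNormedModule)). intros z Hz.
        apply cR_mult. apply F2_cont. unfold Rmin, Rmax in Hz. destruct (Rle_dec x0 u1); lra.
        apply cR_minus. apply cR_id. apply cR_const. }
    apply RInt_le. lra.
    2: apply exd; lra.
    - apply (ex_RInt_continuous (V:=R_CompleteNormedModule)). intros z Hz.
      apply cR_mult. apply cR_const. apply cR_mult. apply F2_cont. unfold Rmin, Rmax in Hz. destruct (Rle_dec x0 u1); lra.
      apply cR_minus. apply cR_id. apply cR_const.
    - intros x Hx. unfold d, kap.
      assert (0 < F2 nu a x) by (apply F2_sign; unfold x0 in *; lra).
      assert (Hr := rho_pt b x0 x u1 u2 a Hbx Hx H12 H2).
      replace (sqrt (x0 - b) * (u2 - u1) / (2 * (u1 - x0) * (a - x0)) * (F2 nu a x * (x - x0)))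
        with (F2 nu a x * (sqrt (x0 - b) * (u2 - u1) * (x - x0) / (2 * (u1 - x0) * (a - x0)))) by (field; lra).
      apply Rmult_le_compat_l; lra. }
  replace (sqrt (x0 - b) * Qf nu a x0 u1 * (u2 - u1) / (2 * (u1 - x0) * (a - x0))) with (kap * Qf nu a x0 u1)
    by (unfold kap; field; lra).
  fold f2 f1. lra.
Qed.

Lemma div_bound c a0 b0 d : 0 < c <= a0 -> 0 < b0 <= d -> c / d <= a0 / b0.
Proof. intros. unfold Rdiv. apply Rmult_le_compat; try lra.
  left; apply Rinv_0_lt_compat; lra. apply Rinv_le_contravar; lra. Qed.

Lemma F2_lower nu a x x1 e : let A := a + nu in
  0 < A -> A < 4 * (x1 + nu) -> x1 <= x -> a - 2 * e <= x -> x < a -> 0 < e ->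
  A * (4 * (x1 + nu) - A) / (4 * (A * sqrt A) * ((2*e) * (2*e) * sqrt (2*e))) <= F2 nu a x.
Proof.
  intros A HA H1 H2 H3 H4 He. unfold F2. fold A.
  apply div_bound.
  - split. apply Rmult_lt_0_compat; lra. apply Rmult_le_compat_l; lra.
  - assert (0 < sqrt (x + nu)) by (apply sqrt_lt_R0; lra).
    assert (0 < sqrt (a - x)) by (apply sqrt_lt_R0; lra).
    split. repeat apply Rmult_lt_0_compat; lra.
    assert (sqrt (x + nu) <= sqrt A) by (apply sqrt_le_1_alt; unfold A; lra).
    assert (sqrt (a - x) <= sqrt (2*e)) by (apply sqrt_le_1_alt; lra).
    assert (x + nu <= A) by (unfold A; lra).
    assert (0 <= x + nu) by (clear -H1 H2 HA; lra).
    assert ((x + nu) * sqrt (x + nu) <= A * sqrt A) by (apply Rmult_le_compat; lra).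
    assert ((a - x) * (a - x) <= (2*e) * (2*e)) by (apply Rmult_le_compat; lra).
    assert ((a - x) * (a - x) * sqrt (a - x) <= (2*e) * (2*e) * sqrt (2*e)) by (apply Rmult_le_compat; nra).
    assert (0 <= (a - x) * (a - x) * sqrt (a - x)) by (apply Rmult_le_pos; nra).
    assert (0 <= (x + nu) * sqrt (x + nu)) by nra.
    apply Rmult_le_compat; try lra.
Qed.

Lemma prod_bound b x u a : b < x -> x < u -> u < a -> (x-b)*(u-x) <= ((a-b)/2)*((a-b)/2).
Proof. intros. assert (0 <= (u - b - 2 * (x - b)) * (u - b - 2 * (x - b))) by apply Rle_0_sqr.
  assert ((u - b) * (u - b) <= (a - b) * (a - b)) by (apply Rmult_le_compat; lra).
  replace (((a-b)/2)*((a-b)/2)) with ((a-b)*(a-b)/4) by field.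
  assert (4*((x-b)*(u-x)) <= (u - b) * (u - b)) by nra. lra. Qed.
Lemma neg_mul_bound f s M : f < 0 -> 0 <= s <= M -> M * f <= f * s.
Proof. intros. nra. Qed.

Ltac clr := repeat match goal with H := _ |- _ => clearbody H end.

Lemma RInt_cst (K p q : R) : RInt (fun _ => K) p q = (q - p) * K.
Proof. rewrite RInt_const. reflexivity. Qed.

Lemma H_pos_exists nu a b : let x0 := (a - 3*nu)/4 in -nu < b -> b < x0 ->
  exists u, x0 < u < a /\ 0 < Hf nu a b u.
Proof.
  intros x0 Hb Hbx.
  set (A := a + nu).
  assert (HA : 0 < A) by (unfold A, x0 in *; lra).
  assert (Hx0a : x0 < a) by (unfold x0, A in *; lra).
  set (x1 := (x0 + a) / 2).
  set (del := 4 * (x1 + nu) - A).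
  assert (Hdel : 0 < del) by (unfold del, x1, x0, A in *; lra).
  set (M := (a - b) / 2).
  set (N := M * RInt (F2 nu a) b x0).
  assert (Hx1b : 0 < sqrt (x1 - b)) by (apply sqrt_lt_R0; unfold x1; lra).
  assert (HsA : 0 < sqrt A) by (apply sqrt_lt_R0; lra).
  set (c := del * sqrt (x1 - b) / (64 * sqrt A)).
  assert (Hc : 0 < c) by (unfold c; apply Rdiv_lt_0_compat; [nra|lra]).
  assert (HN1 : 0 < 1 + Rabs N) by (generalize (Rabs_pos N); lra).
  set (e := Rmin ((a - x1) / 2) (c / (1 + Rabs N))).
  assert (He : 0 < e) by (apply Rmin_pos; [unfold x1; lra| apply Rdiv_lt_0_compat; lra]).
  assert (He1 : e <= (a - x1)/2) by apply Rmin_l.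
  assert (He2 : e <= c / (1 + Rabs N)) by apply Rmin_r.
  assert (Hce : 1 + Rabs N <= c / e).
  { apply Rmult_le_reg_r with e. lra. unfold Rdiv. rewrite Rmult_assoc, Rinv_l, Rmult_1_r by lra.
    apply Rmult_le_reg_r with (/ (1 + Rabs N)). apply Rinv_0_lt_compat; lra.
    rewrite Rmult_comm, <- Rmult_assoc, Rinv_l, Rmult_1_l by lra. exact He2. }
  set (u := a - e).
  exists u. split. unfold u, x1 in *. lra.
  set (k := fun x => F2 nu a x * sqrt ((x - b) * (u - x))).
  set (p2 := a - 2 * e). set (p3 := a - 3 * e / 2).
  assert (Hord : x0 < x1 <= p2 /\ p2 < p3 < u /\ u < a) by (unfold p2, p3, u, x1 in *; lra).
  assert (exk' : forall p q, b <= p <= u -> b <= q <= u -> ex_RInt k p q) by (intros; apply exk; lra).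
  assert (CH : Hf nu a b u = RInt k b x0 + RInt k x0 p2 + RInt k p2 p3 + RInt k p3 u).
  { unfold Hf. fold k.
    rewrite <- (RInt_Chasles (V:=R_CompleteNormedModule) k b x0 u) by (apply exk'; lra).
    rewrite <- (RInt_Chasles (V:=R_CompleteNormedModule) k x0 p2 u) by (apply exk'; lra).
    rewrite <- (RInt_Chasles (V:=R_CompleteNormedModule) k p2 p3 u) by (apply exk'; lra).
    unfold plus; simpl. ring. }
  assert (B1 : N <= RInt k b x0).
  { unfold N. rewrite <- RInt_sc.
    2:{ apply (ex_RInt_continuous (V:=R_CompleteNormedModule)). intros z Hz. apply F2_cont.
        rewrite Rmin_left, Rmax_right in Hz; lra. }
    apply RInt_le. lra.
    - apply (ex_RInt_continuous (V:=R_CompleteNormedModule)). intros z Hz.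
      apply cR_mult. apply cR_const. apply F2_cont. rewrite Rmin_left, Rmax_right in Hz; lra.
    - apply exk'; lra.
    - intros x Hx. unfold k.
      assert (F2 nu a x < 0) by (apply F2_sign; unfold x0 in *; lra).
      assert (sqrt ((x - b) * (u - x)) <= M).
      { rewrite <- (sqrt_square M) by (unfold M; lra). apply sqrt_le_1_alt.
        unfold M. apply prod_bound; unfold u in *; lra. }
      assert (0 <= sqrt ((x - b) * (u - x))) by apply sqrt_pos.
      apply neg_mul_bound; lra. }
  assert (B2 : 0 <= RInt k x0 p2).
  { apply RInt_ge_0. lra. apply exk'; lra. intros x Hx. unfold k.
    apply Rmult_le_pos. left; apply F2_sign; unfold x0 in *; lra. apply sqrt_pos. }
  assert (B4 : 0 <= RInt k p3 u).
  { apply RInt_ge_0. lra. apply exk'; lra. intros x Hx. unfold k.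
    apply Rmult_le_pos. left; apply F2_sign; unfold x0 in *; lra. apply sqrt_pos. }
  set (Fm := A * (4 * (x1 + nu) - A) / (4 * (A * sqrt A) * ((2*e) * (2*e) * sqrt (2*e)))).
  set (Sm := sqrt ((x1 - b) * (e / 2))).
  assert (B3 : (p3 - p2) * (Fm * Sm) <= RInt k p2 p3).
  { rewrite <- RInt_cst. apply RInt_le. lra.
    apply (ex_RInt_continuous (V:=R_CompleteNormedModule)). intros; apply cR_const.
    apply exk'; lra.
    intros x Hx. unfold k.
    assert (Hf2 : Fm <= F2 nu a x) by (apply F2_lower; unfold del, p2, p3, A in *; lra).
    assert (Hsm : Sm <= sqrt ((x - b) * (u - x))).
    { apply sqrt_le_1_alt. apply Rmult_le_compat; unfold p2, p3, u in *; lra. }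
    assert (0 <= Fm).
    { unfold Fm. apply Rmult_le_pos. unfold del, A in *. apply Rmult_le_pos; lra. left. apply Rinv_0_lt_compat.
      assert (0 < sqrt (2*e)) by (apply sqrt_lt_R0; lra). repeat apply Rmult_lt_0_compat; lra. }
    assert (0 <= Sm) by apply sqrt_pos.
    apply Rmult_le_compat; lra. }
  assert (E3 : (p3 - p2) * (Fm * Sm) = c / e).
  { assert (Hs := sqrt_lt_R0 (e/2) ltac:(lra)).
    assert (E2e : sqrt (2 * e) = 2 * sqrt (e / 2)).
    { replace (2 * e) with ((2*2) * (e/2)) by field. rewrite sqrt_mult_alt by lra.
      rewrite sqrt_square by lra. ring. }
    unfold Fm, Sm, p3, p2, c, del. rewrite E2e. rewrite sqrt_mult_alt by (unfold x1; lra).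
    field. repeat split; lra. }
  generalize (Rle_abs (- N)). rewrite Rabs_Ropp. intros.
  rewrite CH. lra.
Qed.

Lemma g_eq nu a b u : -nu < b -> b < u < a ->
  lambda2 nu a u b - lambda3 nu a u b =
  T nu a u b * (2 * Hf nu a b u / (u - b)) / (dT2 nu a u b * dT3 nu a u b).
Proof.
  intros. unfold lambda2, lambda3. rewrite dI2_eq, dI3_eq, Iint_T by lra.
  rewrite <- Dl_eq by lra.
  assert (0 < dT2 nu a u b) by (apply dT2_pos; lra).
  assert (0 < dT3 nu a u b) by (apply dT3_pos; lra).
  field. lra.
Qed.

Lemma Dl_der nu a b u : -nu < b -> b < u < a ->
  is_derive (fun v => dT2 nu a v b - dT3 nu a v b) u (d2T2 nu a u b - d2T3 nu a u b).
Proof. intros. apply (is_derive_minus (fun v => dT2 nu a v b) (fun v => dT3 nu a v b)).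
  apply dT2_der; lra. apply dT3_der; lra. Qed.

Lemma Hf_cont nu a b u : -nu < b -> b < u < a -> continuity_pt (Hf nu a b) u.
Proof.
  intros. apply continuity_pt_filterlim. apply (ex_derive_continuous (Hf nu a b)).
  apply ex_derive_ext_loc with (fun v => (v - b) / 2 * (dT2 nu a v b - dT3 nu a v b)).
  - eapply filter_imp. 2: apply (loc_in b a u); lra. intros v Hv. simpl.
    rewrite Dl_eq by lra. field. lra.
  - auto_derive. split. eexists; apply dT2_der; lra. split. eexists; apply dT3_der; lra. auto.
Qed.

Lemma deriv_lb (f : R -> R) x l m d : is_derive f x l -> f x = 0 -> 0 < m -> 0 < d ->
  (forall y, x < y < x + d -> m * (y - x) <= f y) -> m <= l.
Proof.
  intros Hd H0 Hm Hdp Hy. apply is_derive_Reals in Hd.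
  destruct (Rle_or_lt m l) as [|Hlt]; auto. exfalso.
  assert (He : 0 < m - l) by lra.
  destruct (Hd (m - l) He) as [del Hdel].
  set (h := Rmin del d / 2).
  assert (Hh : 0 < h) by (unfold h; generalize (Rmin_pos del d (cond_pos del) Hdp); lra).
  assert (Hh1 : h < del) by (unfold h; generalize (Rmin_l del d) (cond_pos del); lra).
  assert (Hh2 : h < d) by (unfold h; generalize (Rmin_r del d); generalize (Rmin_pos del d (cond_pos del) Hdp); lra).
  specialize (Hdel h ltac:(lra) ltac:(rewrite Rabs_pos_eq; lra)).
  specialize (Hy (x + h) ltac:(lra)).
  rewrite H0 in Hdel. replace (x + h - x) with h in Hy by ring.
  assert (m <= (f (x + h) - 0) / h).
  { apply Rmult_le_reg_r with h. lra. unfold Rdiv. rewrite Rmult_assoc, Rinv_l, Rmult_1_r by lra. lra. }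
  apply Rabs_def2 in Hdel. lra.
Qed.

Lemma sign_lemma nu a b us : let x0 := (a - 3*nu)/4 in
  -nu < b -> b < x0 -> x0 < us < a -> Hf nu a b us = 0 ->
  forall u, b < u < a -> (u < us -> Hf nu a b u < 0) /\ (us < u -> 0 < Hf nu a b u).
Proof.
  intros x0 Hb Hbx Hus Hz u Hu. unfold x0 in *. clear x0.
  remember ((a - 3*nu)/4) as x0 eqn:Ex.
  assert (Hx0 : -nu < x0) by lra.
  destruct (Rle_or_lt u x0) as [Hle|Hlt].
  - split; intros. apply H_neg; subst; lra. lra.
  - assert (Hsb : 0 < sqrt (x0 - b)) by (apply sqrt_lt_R0; lra).
    split; intros Hc.
    + assert (Hr := R_incr nu a b u us). cbv zeta in Hr. rewrite <- Ex in Hr.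
      specialize (Hr Hb Hbx Hlt Hc ltac:(lra)).
      rewrite Hz in Hr.
      assert (HQ := Qf_pos nu a u). cbv zeta in HQ. rewrite <- Ex in HQ. specialize (HQ Hx0 Hlt ltac:(lra)).
      assert (0 < sqrt (x0 - b) * Qf nu a x0 u * (us - u) / (2 * (u - x0) * (a - x0))).
      { apply Rdiv_lt_0_compat. repeat apply Rmult_lt_0_compat; lra. repeat apply Rmult_lt_0_compat; lra. }
      assert (Hs : 0 < sqrt (u - x0)) by (apply sqrt_lt_R0; lra).
      assert (Hf nu a b u / sqrt (u - x0) < 0) by (unfold Rdiv at 1 in Hr; rewrite Rmult_0_l in Hr; lra).
      replace (Hf nu a b u) with (Hf nu a b u / sqrt (u - x0) * sqrt (u - x0)) by (field; lra).
      apply Rmult_neg_pos; lra.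
    + assert (Hr := R_incr nu a b us u). cbv zeta in Hr. rewrite <- Ex in Hr.
      specialize (Hr Hb Hbx ltac:(lra) Hc ltac:(lra)).
      rewrite Hz in Hr.
      assert (HQ := Qf_pos nu a us). cbv zeta in HQ. rewrite <- Ex in HQ. specialize (HQ Hx0 ltac:(lra) ltac:(lra)).
      assert (0 < sqrt (x0 - b) * Qf nu a x0 us * (u - us) / (2 * (us - x0) * (a - x0))).
      { apply Rdiv_lt_0_compat. repeat apply Rmult_lt_0_compat; lra. repeat apply Rmult_lt_0_compat; lra. }
      assert (Hs : 0 < sqrt (u - x0)) by (apply sqrt_lt_R0; lra).
      assert (0 < Hf nu a b u / sqrt (u - x0)) by (unfold Rdiv at 2 in Hr; rewrite Rmult_0_l in Hr; lra).
      replace (Hf nu a b u) with (Hf nu a b u / sqrt (u - x0) * sqrt (u - x0)) by (field; lra).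
      apply Rmult_lt_0_compat; lra.
Qed.

Lemma Dl_lower nu a b us y : let x0 := (a - 3*nu)/4 in
  -nu < b -> b < x0 -> x0 < us < a -> Hf nu a b us = 0 -> us < y < a ->
  2 * sqrt (us - x0) * (sqrt (x0 - b) * Qf nu a x0 us / (2 * (us - x0) * (a - x0))) / (a - b) * (y - us)
  <= dT2 nu a y b - dT3 nu a y b.
Proof.
  intros x0 Hb Hbx Hus Hz Hy. unfold x0 in *. clear x0.
  remember ((a - 3*nu)/4) as x0 eqn:Ex.
  assert (Hx0 : -nu < x0) by lra.
  rewrite Dl_eq by lra.
  assert (Hr := R_incr nu a b us y). cbv zeta in Hr. rewrite <- Ex in Hr.
  specialize (Hr Hb Hbx ltac:(lra) ltac:(lra) ltac:(lra)).
  rewrite Hz in Hr. unfold Rdiv at 2 in Hr. rewrite Rmult_0_l, Rminus_0_r in Hr.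
  assert (HQ := Qf_pos nu a us). cbv zeta in HQ. rewrite <- Ex in HQ. specialize (HQ Hx0 ltac:(lra) ltac:(lra)).
  set (kap := sqrt (x0 - b) * Qf nu a x0 us / (2 * (us - x0) * (a - x0))).
  assert (Hk : 0 < kap).
  { unfold kap. assert (0 < sqrt (x0 - b)) by (apply sqrt_lt_R0; lra).
    apply Rdiv_lt_0_compat. nra. repeat apply Rmult_lt_0_compat; lra. }
  assert (Hr2 : kap * (y - us) <= Hf nu a b y / sqrt (y - x0)).
  { unfold kap. replace (sqrt (x0 - b) * Qf nu a x0 us / (2 * (us - x0) * (a - x0)) * (y - us))
      with (sqrt (x0 - b) * Qf nu a x0 us * (y - us) / (2 * (us - x0) * (a - x0))) by (field; lra). lra. }
  clearbody kap.
  assert (Hsy : 0 < sqrt (y - x0)) by (apply sqrt_lt_R0; lra).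
  assert (Hsu : sqrt (us - x0) <= sqrt (y - x0)) by (apply sqrt_le_1_alt; lra).
  assert (Hsu0 : 0 < sqrt (us - x0)) by (apply sqrt_lt_R0; lra).
  assert (HH : sqrt (us - x0) * (kap * (y - us)) <= Hf nu a b y).
  { replace (Hf nu a b y) with (sqrt (y - x0) * (Hf nu a b y / sqrt (y - x0))) by (field; lra).
    apply Rmult_le_compat; try lra. apply Rmult_le_pos; lra. }
  assert (Hnn : 0 <= sqrt (us - x0) * (kap * (y - us))) by (apply Rmult_le_pos; [lra| apply Rmult_le_pos; lra]).
  replace (2 * sqrt (us - x0) * kap / (a - b) * (y - us)) with (2 * (sqrt (us - x0) * (kap * (y - us))) / (a - b)) by (field; lra).
  unfold Rdiv. apply Rmult_le_compat. lra. left; apply Rinv_0_lt_compat; lra. lra.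
  apply Rinv_le_contravar; lra.
Qed.

Theorem lemma4p4 (nu a b : R) :
  0 < b + nu -> b + nu < (a + nu) / 4 ->
  let g := fun u2 => lambda2 nu a u2 b - lambda3 nu a u2 b in
  exists ustar : R,
    b < ustar < a /\
    g ustar = 0 /\
    (exists d : R, is_derive g ustar d /\ d <> 0) /\
    (forall u2, b < u2 < a -> g u2 = 0 -> u2 = ustar) /\
    (forall u2, ustar < u2 < a -> 0 < g u2) /\
    (forall u2, b < u2 < ustar -> g u2 < 0).
Proof.
  intros H1 H2 g.
  assert (Hb : -nu < b) by lra.
  assert (Hbx : b < (a - 3*nu)/4) by lra.
  assert (Hx0a : (a - 3*nu)/4 < a) by lra.
  destruct (H_pos_exists nu a b Hb Hbx) as [u1 [Hu1 Hpos]].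
  assert (Hneg0 : Hf nu a b ((a - 3*nu)/4) < 0) by (apply H_neg; lra).
  destruct (Ranalysis5.IVT_interv (Hf nu a b) ((a - 3*nu)/4) u1) as [us [Hus Hz]].
  { intros z Hz. apply Hf_cont; lra. }
  lra. auto. auto.
  assert (Hus2 : (a - 3*nu)/4 < us < u1).
  { split; destruct (Rle_lt_or_eq_dec _ _ (proj1 Hus)) as [|E]; try lra;
    try (rewrite <- E in Hz; lra);
    destruct (Rle_lt_or_eq_dec _ _ (proj2 Hus)) as [|E2]; try lra; rewrite E2 in Hz; lra. }
  assert (SL := sign_lemma nu a b us). cbv zeta in SL. specialize (SL Hb Hbx ltac:(lra) Hz).
  assert (Gs : forall u, b < u < a -> g u = T nu a u b * (2 * Hf nu a b u / (u - b)) / (dT2 nu a u b * dT3 nu a u b)).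
  { intros. unfold g. apply g_eq; lra. }
  assert (Gpos : forall u, b < u < a -> 0 < Hf nu a b u -> 0 < g u).
  { intros. rewrite Gs by auto.
    assert (0 < T nu a u b) by (apply T_pos; lra).
    assert (0 < dT2 nu a u b) by (apply dT2_pos; lra).
    assert (0 < dT3 nu a u b) by (apply dT3_pos; lra).
    apply Rdiv_lt_0_compat. apply Rmult_lt_0_compat; auto. apply Rdiv_lt_0_compat; lra.
    apply Rmult_lt_0_compat; auto. }
  assert (Gneg : forall u, b < u < a -> Hf nu a b u < 0 -> g u < 0).
  { intros. rewrite Gs by auto.
    assert (0 < T nu a u b) by (apply T_pos; lra).
    assert (0 < dT2 nu a u b) by (apply dT2_pos; lra).
    assert (0 < dT3 nu a u b) by (apply dT3_pos; lra).
    apply Rdiv_neg_pos. apply Rmult_pos_neg; auto. apply Rdiv_neg_pos; lra.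
    apply Rmult_lt_0_compat; auto. }
  exists us. split. lra. split.
  { rewrite Gs by lra. rewrite Hz. field. split. lra.
    assert (0 < dT2 nu a us b) by (apply dT2_pos; lra).
    assert (0 < dT3 nu a us b) by (apply dT3_pos; lra). nra. }
  split; [| split; [| split]].
  -
    set (p := fun u => T nu a u b / (dT2 nu a u b * dT3 nu a u b)).
    set (q := fun u => dT2 nu a u b - dT3 nu a u b).
    assert (Hq0 : q us = 0).
    { unfold q. rewrite Dl_eq by lra. rewrite Hz. field. lra. }
    assert (P2 : 0 < dT2 nu a us b) by (apply dT2_pos; lra).
    assert (P3 : 0 < dT3 nu a us b) by (apply dT3_pos; lra).
    assert (PT : 0 < T nu a us b) by (apply T_pos; lra).
    assert (Hp : ex_derive p us).
    { unfold p. auto_derive. split. eexists; apply T_der2; lra.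
      split. eexists; apply dT2_der; lra. split. eexists; apply dT3_der; lra.
      split; auto. apply Rgt_not_eq. apply Rmult_lt_0_compat; lra. }
    assert (Hdq : is_derive q us (d2T2 nu a us b - d2T3 nu a us b)) by (unfold q; apply Dl_der; lra).
    assert (HQ := Qf_pos nu a us). cbv zeta in HQ. specialize (HQ ltac:(lra) ltac:(lra) ltac:(lra)).
    set (x0 := (a - 3*nu)/4) in *.
    set (m := 2 * sqrt (us - x0) * (sqrt (x0 - b) * Qf nu a x0 us / (2 * (us - x0) * (a - x0))) / (a - b)).
    assert (Hm : 0 < m).
    { unfold m. assert (0 < sqrt (x0 - b)) by (apply sqrt_lt_R0; unfold x0; lra).
      assert (0 < sqrt (us - x0)) by (apply sqrt_lt_R0; unfold x0 in *; lra).
      assert (0 < 2 * (us - x0) * (a - x0)) by (unfold x0 in *; repeat apply Rmult_lt_0_compat; lra).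
      apply Rdiv_lt_0_compat. apply Rmult_lt_0_compat. lra. apply Rdiv_lt_0_compat. 
      apply Rmult_lt_0_compat; lra. lra. lra. }
    assert (Hml : m <= d2T2 nu a us b - d2T3 nu a us b).
    { apply (deriv_lb q us _ m (a - us) Hdq Hq0 Hm). lra.
      intros y Hy. unfold q, m. assert (DL := Dl_lower nu a b us y). cbv zeta in DL.
      apply DL; unfold x0 in *; lra. }
    exists (Derive p us * q us + p us * (d2T2 nu a us b - d2T3 nu a us b)). split.
    + apply is_derive_ext_loc with (fun u => p u * q u).
      * eapply filter_imp. 2: apply (loc_in b a us); lra. intros u Hu.
        match goal with |- ?x = ?y => change (@eq R x y) end. unfold g. rewrite g_eq by lra. unfold p, q. rewrite Dl_eq by lra.
        assert (0 < dT2 nu a u b) by (apply dT2_pos; lra).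
        assert (0 < dT3 nu a u b) by (apply dT3_pos; lra). field. lra.
      * exact (is_derive_mult p q us _ _ (Derive_correct _ _ Hp) Hdq Rmult_comm).
    + rewrite Hq0, Rmult_0_r, Rplus_0_l. apply Rgt_not_eq.
      apply Rmult_lt_0_compat. unfold p. apply Rdiv_lt_0_compat; auto. apply Rmult_lt_0_compat; auto. lra.
  - intros u Hu Hg. destruct (Rtotal_order u us) as [Hl|[He|Hg2]]; auto.
    + exfalso. assert (g u < 0) by (apply Gneg; auto; apply SL; auto). lra.
    + exfalso. assert (0 < g u) by (apply Gpos; auto; apply SL; auto). lra.
  - intros u Hu. apply Gpos. lra. apply SL; lra.
  - intros u Hu. apply Gneg. lra. apply SL; lra.
Qed.
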